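(* Let $S$ be a finite, additively commutative, congruence-simple semiring. If the multiplication table of $S$ has two identical rows (i.e. there exist $r_1\ne r_2$ in $S$ with $r_1z=r_2z$ for all $z\in S$), or two identical columns (i.e. there exist $r_1\ne r_2$ with $zr_1=zr_2$ for all $z\in S$), then one of the following holds: (1) there exists $c\in S$ such that $xy=c$ for all $x,y\in S$; (2) $|S|=2$.
   Context: A semiring is a nonempty set $S$ with two associative binary operations $+$ and $\cdot$ satisfying both distributive laws $a(b+c)=ab+ac$ and $(a+b)c=ac+bc$; no identity elements are assumed. It is additively commutative if $(S,+)$ is commutative. A congruence relation on $S$ is an equivalence relation $\sim$ such that $x_1\sim x_2$ implies $c+x_1\sim c+x_2$, $x_1+c\sim x_2+c$, $cx_1\sim cx_2$, $x_1c\sim x_2c$ for all $c\in S$. $S$ is congruence-simple if its only congruence relations are the identity relation and $S\times S$. *)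

(* Defs.v *)
From mathcomp Require Import all_boot.
Set Implicit Arguments. Unset Strict Implicit. Unset Printing Implicit Defensive.

Definition is_semiring (S : Type) (add mul : S -> S -> S) : Prop :=
  (forall a b c, add a (add b c) = add (add a b) c) /\
  (forall a b c, mul a (mul b c) = mul (mul a b) c) /\
  (forall a b c, mul a (add b c) = add (mul a b) (mul a c)) /\
  (forall a b c, mul (add a b) c = add (mul a c) (mul b c)).

Definition add_commutative (S : Type) (add : S -> S -> S) : Prop :=
  forall a b, add a b = add b a.

Definition is_equivalence (S : Type) (R : S -> S -> Prop) : Prop :=
  (forall x, R x x) /\ (forall x y, R x y -> R y x) /\
  (forall x y z, R x y -> R y z -> R x z).

Definition is_congruence (S : Type) (add mul : S -> S -> S)
  (R : S -> S -> Prop) : Prop :=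
  is_equivalence R /\
  forall x1 x2 c, R x1 x2 ->
    R (add c x1) (add c x2) /\ R (add x1 c) (add x2 c) /\
    R (mul c x1) (mul c x2) /\ R (mul x1 c) (mul x2 c).

Definition congruence_simple (S : Type) (add mul : S -> S -> S) : Prop :=
  forall R : S -> S -> Prop, is_congruence add mul R ->
    (forall x y, R x y <-> x = y) \/ (forall x y, R x y).

(* Main.v *)
Require Import Defs.
From mathcomp Require Import all_boot.

Section Aux.
Variables (S : finType) (add mul : S -> S -> S).
Hypothesis aA : forall a b c, add a (add b c) = add (add a b) c.
Hypothesis C : forall a b, add a b = add b a.
Hypothesis idem : forall c, add c c = c.
Hypothesis Hs : congruence_simple add mul.
Hypothesis proj : forall x y, mul x y = y.

Lemma le_addP c x a : add (add c x) a = a <-> add c a = a /\ add x a = a.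
Proof.
split.
- move=> H; split.
  + by rewrite -{1}H aA aA idem H.
  + rewrite -{1}H aA.
    have -> : add x (add c x) = add c x by rewrite aA (C x c) -aA idem.
    exact H.
- by move=> [H1 H2]; rewrite -aA H2 H1.
Qed.

Lemma Ra_cong a : is_congruence add mul (fun x y => add x a = a <-> add y a = a).
Proof.
split.
- split; first by [].
  split; first by move=> x y H; split; apply H.
  by move=> x y z H1 H2; split => h; [apply H2; apply H1| apply H1; apply H2].
- move=> x1 x2 c H; split; [|split; [|split]].
  + have [p1 p2] := le_addP c x1 a; have [q1 q2] := le_addP c x2 a.
    split=> h; [apply q2; have [u v] := p1 h; split=> //; exact/H
               | apply p2; have [u v] := q1 h; split=> //; exact/H].
  + rewrite (C x1) (C x2).
    have [p1 p2] := le_addP c x1 a; have [q1 q2] := le_addP c x2 a.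
    split=> h; [apply q2; have [u v] := p1 h; split=> //; exact/H
               | apply p2; have [u v] := q1 h; split=> //; exact/H].
  + by rewrite !proj.
  + by rewrite !proj.
Qed.

Lemma card_le2 a : (forall x y, (add x a = a <-> add y a = a) <-> x = y) -> #|S| <= 2.
Proof.
move=> Hid.
have inj : injective (fun x => add x a == a).
  move=> x y /= E; apply Hid.
  split => h.
  - by move: E; rewrite h eqxx => /esym/eqP.
  - by move: E; rewrite h eqxx => /eqP.
by move: (leq_card _ inj); rewrite card_bool.
Qed.

Lemma semilat (r1 r2 : S) : r1 <> r2 -> #|S| = 2.
Proof.
move=> ne.
have ge2 : 1 < #|S|.
  apply/card_gt1P; exists r1, r2; split => //; exact/eqP.
have le2 : #|S| <= 2.
  case: (Hs _ (Ra_cong r1)) => [H1|F1]; first exact: card_le2 H1.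
  case: (Hs _ (Ra_cong r2)) => [H2|F2]; first exact: card_le2 H2.
  exfalso; apply ne.
  have e1 : add r2 r1 = r1 by apply (F1 r1 r2); apply idem.
  have e2 : add r1 r2 = r2 by apply (F2 r2 r1); apply idem.
  by rewrite -e1 C e2.
by apply/eqP; rewrite eqn_leq le2 ge2.
Qed.
End Aux.

Lemma row_case (S : finType) (add mul : S -> S -> S) :
  is_semiring add mul ->
  add_commutative add ->
  congruence_simple add mul ->
  (exists r1 r2 : S, r1 <> r2 /\ forall z, mul r1 z = mul r2 z) ->
  (exists c : S, forall x y, mul x y = c) \/ #|S| = 2.
Proof.
move=> [aA [mA [dl dr]]] C Hs [r1 [r2 [ne Hr]]].
have allrow : forall x y z, mul x z = mul y z.
  case: (Hs (fun x y => forall z, mul x z = mul y z)).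
  - split.
    + split; first by [].
      split; first by move=> x y H z; rewrite H.
      by move=> x y z H1 H2 w; rewrite H1 H2.
    + move=> x1 x2 c H; split; [|split; [|split]] => z.
      * by rewrite !dr H.
      * by rewrite !dr H.
      * by rewrite -!mA H.
      * by rewrite -!mA H.
  - by move=> H; exfalso; apply ne; apply/H.
  - by move=> H x y z; apply H.
pose f z := mul r1 z.
have mulf : forall x y, mul x y = f y by move=> x y; apply allrow.
have fadd : forall a b, f (add a b) = add (f a) (f b) by move=> a b; rewrite /f dl.
have ff : forall x, f (f x) = f x by move=> x; rewrite /f mA -!/(f _) !mulf.
case: (Hs (fun x y => f x = f y)).
- split.
  + split; first by [].
    split; first by move=> x y ->.
    by move=> x y z -> ->.
  + move=> x1 x2 c H; split; [|split; [|split]].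
    * by rewrite !fadd H.
    * by rewrite !fadd H.
    * by rewrite !mulf H.
    * by rewrite !mulf.
- move=> Hid.
  have fid : forall x, f x = x by move=> x; apply Hid; apply ff.
  have proj : forall x y, mul x y = y by move=> x y; rewrite mulf fid.
  have idem : forall c, add c c = c.
    by move=> c; rewrite -{3}(proj (add c c) c) dr !proj.
  right; exact: (@semilat _ add mul aA C idem Hs proj _ _ ne).
- move=> Hfull; left; exists (f r1) => x y; rewrite mulf; apply Hfull.
Qed.

Theorem lemma2p1 (S : finType) (add mul : S -> S -> S) :
  is_semiring add mul ->
  add_commutative add ->
  congruence_simple add mul ->
  ((exists r1 r2 : S, r1 <> r2 /\ forall z, mul r1 z = mul r2 z) \/
   (exists r1 r2 : S, r1 <> r2 /\ forall z, mul z r1 = mul z r2)) ->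
  (exists c : S, forall x y, mul x y = c) \/ #|S| = 2.
Proof.
move=> SR C Hs [H|H]; first exact: (@row_case _ _ _ SR C Hs H).
have SR' : is_semiring add (fun a b => mul b a).
  case: SR => aA [mA [dl dr]].
  split; first exact: aA.
  split; first by move=> a b c; rewrite mA.
  split; first by move=> a b c; rewrite dr.
  by move=> a b c; rewrite dl.
have Hs' : congruence_simple add (fun a b => mul b a).
  move=> R [Eq HR]; apply Hs; split => // x1 x2 c Hx.
  have [h1 [h2 [h3 h4]]] := HR x1 x2 c Hx; by split; [|split; [|split]].
case: (@row_case _ _ _ SR' C Hs' H) => [[c Hc]|->]; last by right.
by left; exists c => x y; apply Hc.
Qed.
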